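(* If $C$ is any homogeneous binary perfect code of length $n$ (containing $0^n$), then the Vasil'ev code $V_C^0=\{(x+y,\ |x|,\ x)\mid x\in F^n,\ y\in C\}$ of length $2n+1$ is homogeneous.
   Context: $|x|=x_1+\dots+x_n\pmod 2$. For a binary perfect code $C$ of length $m$ and $y\in C$, $STS(C,y)=\{\mathrm{supp}(x+y)\mid x\in C,\ d(x,y)=3\}$, with $d$ the Hamming distance. A perfect code $C$ containing $0^m$ is homogeneous if for every $y\in C$ there is a permutation $\pi\in S_m$ with $\pi(STS(C,y))=STS(C,0^m)$. *)

(* Defs.v *)
(* Binary words of length m are {ffun 'I_m -> bool},
   bool playing the role of F = GF(2) (addition = xor, (+) ). *)
From mathcomp Require Import all_boot fingroup perm.
Set Implicit Arguments. Unset Strict Implicit. Unset Printing Implicit Defensive.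

Definition word (m : nat) := {ffun 'I_m -> bool}.

Definition zero_word (m : nat) : word m := [ffun _ => false].

Definition wadd (m : nat) (x y : word m) : word m := [ffun i => x i (+) y i].

Definition supp (m : nat) (x : word m) : {set 'I_m} := [set i | x i].

Definition hdist (m : nat) (x y : word m) : nat := #|supp (wadd x y)|.

Definition wparity (m : nat) (x : word m) : bool := \big[xorb/false]_(i < m) x i.

Definition perfect_code (m : nat) (C : {set word m}) : Prop :=
  forall x : word m, #|[set c in C | hdist x c <= 1]| = 1.

Definition STS (m : nat) (C : {set word m}) (y : word m) : {set {set 'I_m}} :=
  [set supp (wadd x y) | x in [set x in C | hdist x y == 3]].

Definition perm_family (m : nat) (pi : {perm 'I_m}) (S : {set {set 'I_m}})
  : {set {set 'I_m}} := [set [set pi i | i in B] | B : {set 'I_m} in S].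

Definition homogeneous (m : nat) (C : {set word m}) : Prop :=
  [/\ perfect_code C, zero_word m \in C &
      forall y, y \in C -> exists pi : {perm 'I_m},
          perm_family pi (STS C y) = STS C (zero_word m)].

Definition concat3 (n : nat) (u : word n) (b : bool) (v : word n)
  : word (n + (1 + n)) :=
  [ffun i => match split i with
             | inl j => u j
             | inr k => match split k with
                        | inl _ => b
                        | inr j => v j
                        end
             end].

Definition vasilev0 (n : nat) (C : {set word n}) : {set word (n + (1 + n))} :=
  [set concat3 (wadd x y) (wparity x) x | x in [set: word n], y in C].

(* Main.v *)
Require Import Defs.
From mathcomp Require Import all_boot fingroup perm.
From mathcomp Require Import zify.
Set Implicit Arguments. Unset Strict Implicit. Unset Printing Implicit Defensive.

Definition wt (m : nat) (x : word m) : nat := \sum_(i < m) (x i : nat).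
Definition chr (m : nat) (B : {set 'I_m}) : word m := [ffun i => i \in B].

Lemma wt_supp m (x : word m) : #|supp x| = wt x.
Proof.
rewrite -sum1_card /wt big_mkcond /=; apply: eq_bigr => i _.
by rewrite /supp inE; case: (x i).
Qed.

Lemma hdistE m (x y : word m) : hdist x y = wt (wadd x y).
Proof. by rewrite /hdist wt_supp. Qed.

Lemma waddC m (x y : word m) : wadd x y = wadd y x.
Proof. by apply/ffunP => i; rewrite !ffunE addbC. Qed.

Lemma waddA m (x y z : word m) : wadd x (wadd y z) = wadd (wadd x y) z.
Proof. by apply/ffunP => i; rewrite !ffunE addbA. Qed.

Lemma wadd0 m (x : word m) : wadd (zero_word m) x = x.
Proof. by apply/ffunP => i; rewrite !ffunE. Qed.

Lemma waddK m (x y : word m) : wadd x (wadd x y) = y.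
Proof. by apply/ffunP => i; rewrite !ffunE addKb. Qed.

Lemma waddKr m (x y : word m) : wadd (wadd x y) y = x.
Proof. by apply/ffunP => i; rewrite !ffunE addbK. Qed.

Lemma supp_chr m (B : {set 'I_m}) : supp (chr B) = B.
Proof. by apply/setP => i; rewrite /supp inE ffunE. Qed.

Lemma chr_supp m (x : word m) : chr (supp x) = x.
Proof. by apply/ffunP => i; rewrite ffunE /supp inE. Qed.

Lemma wt_chr m (B : {set 'I_m}) : wt (chr B) = #|B|.
Proof. by rewrite -wt_supp supp_chr. Qed.

Lemma wt0 m (x : word m) : wt x = 0 -> x = zero_word m.
Proof.
move=> /eqP; rewrite /wt sum_nat_eq0 => /forallP H.
apply/ffunP => i; rewrite ffunE; move: (H i) => /=; by case: (x i).
Qed.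

Lemma wt_zero m : wt (zero_word m) = 0.
Proof. by rewrite /wt big1 // => i _; rewrite ffunE. Qed.

Lemma wt_add m (x y : word m) : wt (wadd x y) <= wt x + wt y.
Proof.
rewrite /wt -big_split /=; apply: leq_sum => i _; rewrite ffunE.
by case: (x i); case: (y i).
Qed.

Lemma odd_sum m (F : 'I_m -> nat) :
  odd (\sum_(i < m) F i) = \big[addb/false]_(i < m) odd (F i).
Proof. exact: (big_morph odd oddD). Qed.

Lemma wparityE m (x : word m) : wparity x = odd (wt x).
Proof.
rewrite /wt odd_sum /wparity.
elim/big_rec2: _ => // i a b _ ->; rewrite oddb.
by case: (x i); case: b.
Qed.

Lemma wparity_add m (x y : word m) :
  wparity (wadd x y) = wparity x (+) wparity y.
Proof.
rewrite !wparityE /wt -oddD -big_split /= !odd_sum; apply: eq_bigr => i _.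
by rewrite ffunE; case: (x i); case: (y i).
Qed.

Lemma STS_char m (C : {set word m}) y (B : {set 'I_m}) :
  (B \in STS C y) = (#|B| == 3) && (wadd y (chr B) \in C).
Proof.
apply/imsetP/andP => [[x]|[B3 BC]].
  rewrite inE => /andP[xC]; rewrite hdistE -wt_supp => /eqP d3 ->.
  by rewrite d3 chr_supp [wadd x y]waddC waddK.
exists (wadd y (chr B)); last by rewrite [wadd _ y]waddC waddK supp_chr.
by rewrite inE BC hdistE [wadd _ y]waddC waddK wt_chr.
Qed.

Lemma waddKK m (c a b : word m) : wadd (wadd c a) (wadd c b) = wadd a b.
Proof. by apply/ffunP => i; rewrite !ffunE addbACA addbb. Qed.

Definition e1 m (i : 'I_m) : word m := chr [set i].

Lemma mindC m (C : {set word m}) c t :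
  perfect_code C -> c \in C -> 0 < wt t <= 2 -> wadd c t \notin C.
Proof.
move=> pC cC /andP[t0 t2]; apply/negP => ctC.
have [i ti] : exists i, t i.
  case: (pickP (fun i => t i)) => [i ti|H]; first by exists i.
  suff : wt t = 0 by move=> E; rewrite E in t0.
  by rewrite /wt big1 // => i _; move: (H i) => /= ->.
set x := wadd c (e1 i).
move: (pC x) => /eqP /cards1P [a Ha].
have : c \in [set c0 in C | hdist x c0 <= 1].
  by rewrite inE cC hdistE /x [wadd _ c]waddC waddK /e1 wt_chr cards1.
have : wadd c t \in [set c0 in C | hdist x c0 <= 1].
  rewrite inE ctC hdistE /x waddKK.
  have -> : wt (wadd (e1 i) t) = (wt t).-1.
    rewrite /wt /e1 /chr (bigD1 i) //= [in RHS](bigD1 i) //= !ffunE ti inE eqxx /=.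
    congr (_); apply: eq_bigr => j ji; rewrite !ffunE inE (negbTE ji).
    by [].
  by rewrite -subn1 leq_subLR.
rewrite Ha !inE => /eqP E1 /eqP E2.
have tz : t = zero_word m.
  by rewrite -(waddK c t) E1 -E2; apply/ffunP => j; rewrite !ffunE addbb.
by move: t0; rewrite tz wt_zero.
Qed.

Definition lft n (w : word (n + (1 + n))) : word n := [ffun j => w (lshift (1 + n) j)].
Definition md n (w : word (n + (1 + n))) : bool := w (rshift n (lshift n (ord0 : 'I_1))).
Definition rgt n (w : word (n + (1 + n))) : word n :=
  [ffun j => w (rshift n (rshift 1 j))].

Lemma concat3_eta n (w : word (n + (1 + n))) : w = concat3 (lft w) (md w) (rgt w).
Proof.
apply/ffunP => i; rewrite ffunE -[i]splitK; case: (split i) => [j|k] /=.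
  by rewrite (unsplitK (inl _ : 'I_n + 'I_(1+n))) ffunE.
rewrite (unsplitK (inr _ : 'I_n + 'I_(1+n))) -[k]splitK.
case: (split k) => [o|j] /=.
  rewrite (unsplitK (inl _ : 'I_1 + 'I_n)).
  by rewrite /md (ord1 o).
by rewrite (unsplitK (inr _ : 'I_1 + 'I_n)) ffunE.
Qed.

Lemma lft_concat n u b (v : word n) : lft (concat3 u b v) = u.
Proof. by apply/ffunP => j; rewrite !ffunE (unsplitK (inl _)). Qed.

Lemma rgt_concat n u b (v : word n) : rgt (concat3 u b v) = v.
Proof.
by apply/ffunP => j; rewrite !ffunE (unsplitK (inr _)) /= (unsplitK (inr _)).
Qed.

Lemma md_concat n u b (v : word n) : md (concat3 u b v) = b.
Proof. by rewrite /md !ffunE (unsplitK (inr _)) /= (unsplitK (inl _)). Qed.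

Lemma lft_add n (a b : word (n + (1 + n))) : lft (wadd a b) = wadd (lft a) (lft b).
Proof. by apply/ffunP => j; rewrite !ffunE. Qed.
Lemma rgt_add n (a b : word (n + (1 + n))) : rgt (wadd a b) = wadd (rgt a) (rgt b).
Proof. by apply/ffunP => j; rewrite !ffunE. Qed.
Lemma md_add n (a b : word (n + (1 + n))) : md (wadd a b) = md a (+) md b.
Proof. by rewrite /md !ffunE. Qed.

Lemma wt_split n (w : word (n + (1 + n))) : wt w = wt (lft w) + md w + wt (rgt w).
Proof.
rewrite /wt big_split_ord /= big_split_ord /= big_ord1 addnA.
congr (_ + _ + _); apply: eq_bigr => j _; by rewrite ffunE.
Qed.

Lemma memV n (C : {set word n}) w :
  (w \in vasilev0 C) = (wadd (lft w) (rgt w) \in C) && (md w == wparity (rgt w)).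
Proof.
apply/imset2P/andP => [[x y _ yC ->]|[zC /eqP mw]].
  by rewrite lft_concat rgt_concat md_concat [wadd (wadd x y) x]waddC waddK.
exists (rgt w) (wadd (lft w) (rgt w)) => //.
by rewrite {1}[w]concat3_eta mw [wadd (rgt w) _]waddC waddKr.
Qed.

Lemma memV_add n (C : {set word n}) y a : y \in vasilev0 C ->
  (wadd y a \in vasilev0 C) =
  (wadd (wadd (lft y) (rgt y)) (wadd (lft a) (rgt a)) \in C) && (md a == wparity (rgt a)).
Proof.
rewrite !memV => /andP[_ /eqP my].
rewrite lft_add rgt_add md_add wparity_add my.
have -> : wadd (wadd (lft y) (lft a)) (wadd (rgt y) (rgt a)) =
          wadd (wadd (lft y) (rgt y)) (wadd (lft a) (rgt a)).
  by apply/ffunP => j; rewrite !ffunE addbACA.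
congr (_ && _); by case: (wparity (rgt y)); case: (md a); case: (wparity (rgt a)).
Qed.

Lemma mindV n (C : {set word n}) c a : perfect_code C -> c \in vasilev0 C ->
  0 < wt a <= 2 -> wadd c a \notin vasilev0 C.
Proof.
move=> pC cV /andP[a0 a2]; rewrite memV_add //.
have cC : wadd (lft c) (rgt c) \in C by move: cV; rewrite memV => /andP[].
have ws := wt_split a.
have wt_t := wt_add (lft a) (rgt a).
case Et: (wt (wadd (lft a) (rgt a))) => [|k].
  move/wt0: Et => Et.
  have Elr : lft a = rgt a.
    by rewrite -[lft a](waddKr _ (rgt a)) Et wadd0.
  rewrite wparityE; apply/negP => /andP[_ /eqP mA].
  move: ws a0 a2; rewrite Elr mA.
  case: (wt (rgt a)) => [|[|r]] //=; lia.
rewrite (negbTE (mindC pC cC _)) //.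
rewrite Et /=; rewrite -Et.
apply: leq_trans wt_t _; apply: leq_trans a2; rewrite ws; lia.
Qed.

Lemma waddr0 m (x : word m) : wadd x (zero_word m) = x.
Proof. by rewrite waddC wadd0. Qed.

Lemma wt_e1 m (i : 'I_m) : wt (e1 i) = 1.
Proof. by rewrite /e1 wt_chr cards1. Qed.

Lemma par_e1 m (i : 'I_m) : wparity (e1 i) = true.
Proof. by rewrite wparityE wt_e1. Qed.

Lemma par_zero m : wparity (zero_word m) = false.
Proof. by rewrite wparityE wt_zero. Qed.

Definition midx n : 'I_(n + (1 + n)) := rshift n (lshift n (ord0 : 'I_1)).
Definition lidx n (k : 'I_n) : 'I_(n + (1 + n)) := lshift (1 + n) k.
Definition ridx n (k : 'I_n) : 'I_(n + (1 + n)) := rshift n (rshift 1 k).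

Lemma lft_el n k : lft (e1 (lidx k)) = e1 k :> word n.
Proof. by apply/ffunP => j; rewrite !ffunE !inE eq_lshift. Qed.
Lemma rgt_el n k : rgt (e1 (lidx k)) = zero_word n.
Proof. by apply/ffunP => j; rewrite !ffunE !inE eq_rlshift. Qed.
Lemma md_el n (k : 'I_n) : md (e1 (lidx k)) = false.
Proof. by rewrite /md !ffunE !inE eq_rlshift. Qed.
Lemma lft_em n : lft (e1 (midx n)) = zero_word n.
Proof. by apply/ffunP => j; rewrite !ffunE !inE eq_lrshift. Qed.
Lemma rgt_em n : rgt (e1 (midx n)) = zero_word n.
Proof. by apply/ffunP => j; rewrite !ffunE !inE eq_rshift eq_rlshift. Qed.
Lemma md_em n : md (e1 (midx n)) = true.
Proof. by rewrite /md !ffunE !inE eqxx. Qed.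
Lemma lft_er n k : lft (e1 (ridx k)) = zero_word n.
Proof. by apply/ffunP => j; rewrite !ffunE !inE eq_lrshift. Qed.
Lemma rgt_er n k : rgt (e1 (ridx k)) = e1 k :> word n.
Proof. by apply/ffunP => j; rewrite !ffunE !inE !eq_rshift. Qed.
Lemma md_er n (k : 'I_n) : md (e1 (ridx k)) = false.
Proof. by rewrite /md !ffunE !inE eq_rshift eq_lrshift. Qed.

Lemma perfectV n (C : {set word n}) : perfect_code C -> perfect_code (vasilev0 C).
Proof.
move=> pC w; set z := wadd (lft w) (rgt w).
have [c0 c0V c0d] : exists2 c0, c0 \in vasilev0 C & hdist w c0 <= 1.
  move: (pC z) => /eqP/cards1P [c Hc].
  have : c \in [set c0 in C | hdist z c0 <= 1] by rewrite Hc set11.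
  rewrite inE => /andP [cC]; rewrite hdistE -wt_supp => dzc.
  have Ec : c = wadd z (chr (supp (wadd z c))) by rewrite chr_supp waddK.
  have hd a : hdist w (wadd w a) = wt a by rewrite hdistE waddK.
  case: (set_0Vmem (supp (wadd z c))) => [D0 | [k kD]].
    rewrite D0 (_ : chr set0 = zero_word n) ?waddr0 in Ec; last first.
      by apply/ffunP => j; rewrite !ffunE inE.
    case: (boolP (md w == wparity (rgt w))) => Hm.
      exists w; first by rewrite memV -/z -Ec cC.
      by rewrite hdistE (_ : wadd w w = zero_word (n + (1 + n))) ?wt_zero //;
        apply/ffunP => j; rewrite !ffunE addbb.
    exists (wadd w (e1 (midx n))); last by rewrite hd wt_e1.
    rewrite memV lft_add rgt_add md_add lft_em rgt_em md_em !waddr0 -/z -Ec cC /=.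
    by move: Hm; case: (md w); case: (wparity (rgt w)).
  have Dk : supp (wadd z c) = [set k].
    have : 0 < #|supp (wadd z c)| by apply/card_gt0P; exists k.
    move=> D1; have /cards1P [k' Ek'] : #|supp (wadd z c)| == 1.
      by rewrite eqn_leq dzc D1.
    by move: kD; rewrite Ek' inE => /eqP <-.
  rewrite Dk -/(e1 k) in Ec.
  case: (boolP (md w == wparity (rgt w))) => Hm.
    exists (wadd w (e1 (lidx k))); last by rewrite hd wt_e1.
    rewrite memV lft_add rgt_add md_add lft_el rgt_el md_el !waddr0 addbF Hm andbT.
    by rewrite -waddA [wadd (e1 k) _]waddC waddA -/z -Ec.
  exists (wadd w (e1 (ridx k))); last by rewrite hd wt_e1.
  rewrite memV lft_add rgt_add md_add lft_er rgt_er md_er !waddr0 addbF.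
  rewrite waddA -/z -Ec cC wparity_add par_e1 /=.
  by move: Hm; case: (md w); case: (wparity (rgt w)).
have uniqV c1 c2 : c1 \in vasilev0 C -> hdist w c1 <= 1 ->
    c2 \in vasilev0 C -> hdist w c2 <= 1 -> c2 = c1.
  move=> c1V d1 c2V d2; set a := wadd c1 c2.
  have c2E : c2 = wadd c1 a by rewrite /a waddK.
  have wa : wt a <= 2.
    rewrite /a -(waddKK w c1 c2); apply: leq_trans (wt_add _ _) _.
    by rewrite -!hdistE; lia.
  case Ea: (wt a) => [|k].
    by rewrite c2E (wt0 Ea) waddr0.
  have : 0 < wt a <= 2 by rewrite wa Ea.
  by move/(mindV pC c1V); rewrite -c2E c2V.
apply/eqP/cards1P; exists c0; apply/setP => c; rewrite !inE.
apply/andP/eqP => [[cV cd]|->]; last by [].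
exact: uniqV.
Qed.

Definition pw m (s : {perm 'I_m}) (u : word m) : word m := [ffun j => u ((s^-1)%g j)].

Lemma wt_pw m (s : {perm 'I_m}) u : wt (pw s u) = wt u.
Proof.
rewrite /wt (reindex_inj (@perm_inj _ s)) /=; apply: eq_bigr => j _.
by rewrite ffunE permK.
Qed.

Lemma supp_pw m (s : {perm 'I_m}) u : supp (pw s u) = s @: supp u.
Proof.
apply/setP => j; rewrite /supp inE ffunE -{2}[j](permKV s) mem_imset ?inE //.
exact: perm_inj.
Qed.

Lemma pw_add m (s : {perm 'I_m}) a b : pw s (wadd a b) = wadd (pw s a) (pw s b).
Proof. by apply/ffunP => j; rewrite !ffunE. Qed.

Lemma pw_zero m (s : {perm 'I_m}) : pw s (zero_word m) = zero_word m.
Proof. by apply/ffunP => j; rewrite !ffunE. Qed.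

Lemma keyC m (C : {set word m}) (z0 : word m) (p : {perm 'I_m}) t :
  perfect_code C -> z0 \in C -> zero_word m \in C ->
  perm_family p (STS C z0) = STS C (zero_word m) -> wt t <= 3 ->
  (wadd z0 t \in C) = (pw p t \in C).
Proof.
move=> pC z0C zC Hp t3.
case Et: (wt t) => [|[|[|[|k]]]]; last by rewrite Et in t3.
- by rewrite (wt0 Et) waddr0 pw_zero z0C zC.
- rewrite (negbTE (mindC pC z0C _)) ?Et //.
  by rewrite -(wadd0 (pw p t)) (negbTE (mindC pC zC _)) // wt_pw Et.
- rewrite (negbTE (mindC pC z0C _)) ?Et //.
  by rewrite -(wadd0 (pw p t)) (negbTE (mindC pC zC _)) // wt_pw Et.
have E1 : (wadd z0 t \in C) = (supp t \in STS C z0).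
  by rewrite STS_char chr_supp wt_supp Et.
have E2 : (pw p t \in C) = (p @: supp t \in STS C (zero_word m)).
  by rewrite STS_char wadd0 -supp_pw chr_supp wt_supp wt_pw Et.
rewrite E1 E2 -Hp /perm_family mem_imset //.
apply: imset_inj; exact: perm_inj.
Qed.

Definition ext n (s : {perm 'I_n}) (i : 'I_(n + (1 + n))) : 'I_(n + (1 + n)) :=
  match split i with
  | inl j => lshift (1 + n) (s j)
  | inr k => rshift n (match split k with
                       | inl o => lshift n o
                       | inr j => rshift 1 (s j) end)
  end.

Lemma split_lsh m n (j : 'I_m) : split (lshift n j) = inl j.
Proof. exact: (unsplitK (inl j : 'I_m + 'I_n)). Qed.
Lemma split_rsh m n (k : 'I_n) : split (rshift m k) = inr k.
Proof. exact: (unsplitK (inr k : 'I_m + 'I_n)). Qed.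

Lemma extK n (s : {perm 'I_n}) : cancel (ext s) (ext (s^-1)%g).
Proof.
move=> i; rewrite /ext -[i]splitK; case: (split i) => [j|k] /=.
  by rewrite !split_lsh permK.
rewrite -[k]splitK; case: (split k) => [o|j] /=.
  by rewrite !split_rsh !split_lsh.
by rewrite !split_rsh permK.
Qed.

Definition pext n (s : {perm 'I_n}) : {perm 'I_(n + (1 + n))} := perm (can_inj (extK s)).

Lemma pext_l n (s : {perm 'I_n}) k : pext s (lidx k) = lidx (s k).
Proof. by rewrite permE /ext /lidx split_lsh. Qed.
Lemma pext_r n (s : {perm 'I_n}) k : pext s (ridx k) = ridx (s k).
Proof.
by rewrite permE /ext /ridx split_rsh
  split_rsh.
Qed.
Lemma pext_m n (s : {perm 'I_n}) : pext s (midx n) = midx n.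
Proof.
by rewrite permE /ext /midx split_rsh
  split_lsh.
Qed.

Lemma lft_pext n (s : {perm 'I_n}) (B : {set 'I_(n + (1 + n))}) : lft (chr (pext s @: B)) = pw s (lft (chr B)).
Proof.
apply/ffunP => j; rewrite !ffunE -{1}[j](permKV s).
rewrite -[lshift _ (s _)]/(lidx (s _)) -pext_l mem_imset //; exact: perm_inj.
Qed.
Lemma rgt_pext n (s : {perm 'I_n}) (B : {set 'I_(n + (1 + n))}) : rgt (chr (pext s @: B)) = pw s (rgt (chr B)).
Proof.
apply/ffunP => j; rewrite !ffunE -{1}[j](permKV s).
rewrite -[rshift _ (rshift _ (s _))]/(ridx (s _)) -pext_r mem_imset //; exact: perm_inj.
Qed.
Lemma md_pext n (s : {perm 'I_n}) (B : {set 'I_(n + (1 + n))}) : md (chr (pext s @: B)) = md (chr B).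
Proof.
rewrite /md !ffunE -[rshift _ _]/(midx n) -{1}(pext_m s) mem_imset //; exact: perm_inj.
Qed.

Lemma lft_zero n : lft (zero_word (n + (1 + n))) = zero_word n.
Proof. by apply/ffunP => j; rewrite !ffunE. Qed.
Lemma rgt_zero n : rgt (zero_word (n + (1 + n))) = zero_word n.
Proof. by apply/ffunP => j; rewrite !ffunE. Qed.
Lemma md_zero n : md (zero_word (n + (1 + n))) = false.
Proof. by rewrite /md !ffunE. Qed.

Lemma zeroV n (C : {set word n}) : zero_word n \in C -> zero_word (n + (1 + n)) \in vasilev0 C.
Proof. by move=> zC; rewrite memV lft_zero rgt_zero md_zero wadd0 zC par_zero. Qed.

Theorem theorem3 (n : nat) (C : {set word n}) :
  homogeneous C -> homogeneous (vasilev0 C).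
Proof.
move=> [pC zC hC]; split; [exact: perfectV | exact: zeroV |].
move=> y yV; set z0 := wadd (lft y) (rgt y).
have z0C : z0 \in C by move: yV; rewrite memV => /andP[].
have [p Hp] := hC z0 z0C.
have zV := zeroV zC.
have key B : (B \in STS (vasilev0 C) y) = (pext p @: B \in STS (vasilev0 C) (zero_word _)).
  rewrite !STS_char card_imset; last exact: perm_inj.
  rewrite (memV_add _ yV) (memV_add _ zV) lft_zero rgt_zero wadd0.
  rewrite lft_pext rgt_pext md_pext -pw_add !wparityE wt_pw -!wparityE.
  case: (#|B| =P 3) => //= B3.
  congr (_ && _); rewrite wadd0 -/z0; apply: keyC => //.
  apply: leq_trans (wt_add _ _) _.
  by rewrite -B3 -wt_chr [wt (chr B)]wt_split; lia.
exists (pext p); apply/setP => D; apply/imsetP/idP => [[B BS ->]|DS].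
  by rewrite -key.
exists ((pext p)^-1%g @: D).
  by rewrite key -imset_comp (eq_imset _ (permKV (pext p))) imset_id.
by rewrite -imset_comp (eq_imset _ (permKV (pext p))) imset_id.
Qed.
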